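(* Let $G$ be an edge-transitive graph with an odd number of edges. Then there are no two distinct edges $\{a,b\}\neq\{c,d\}$ of $G$ such that there is perfect state transfer between $e_a-e_b$ and $e_c-e_d$.
   Context: With $L=\Delta-A$ the Laplacian of $G$ and $U(t)=\exp(itL)$, there is perfect state transfer between $e_a-e_b$ and $e_c-e_d$ if $U(t)(e_a-e_b)=\gamma(e_c-e_d)$ for some $t\ge0$ and $\gamma\in\mathbb{C}$, $|\gamma|=1$; $e_v$ is the standard basis vector of $v$. *)

(* Defs.v *)
From HB Require Import structures.
From mathcomp Require Import all_boot all_order all_algebra all_fingroup.
From mathcomp Require Import all_classical all_reals all_analysis.
From mathcomp Require Import complex.
Import numFieldTopology.Exports numFieldNormedType.Exports.
Set Implicit Arguments. Unset Strict Implicit. Unset Printing Implicit Defensive.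
Import Order.TTheory GRing.Theory Num.Theory.
Local Open Scope ring_scope.
Local Open Scope complex_scope.

Definition Cplx (R : realType) := R[i].
HB.instance Definition _ (R : realType) :=
  NormedModule.copy (Cplx R) ((Cplx R : numFieldType)^o).

Definition simple_graph (V : finType) (adj : rel V) : Prop :=
  symmetric adj /\ irreflexive adj.

Definition edges (V : finType) (adj : rel V) : {set {set V}} :=
  [set [set a; b] | a in V, b in V & adj a b].

Definition is_aut (V : finType) (adj : rel V) (s : {perm V}) : Prop :=
  forall x y, adj (s x) (s y) = adj x y.

Definition edge_transitive (V : finType) (adj : rel V) : Prop :=
  forall e1 e2, e1 \in edges adj -> e2 \in edges adj ->
    exists s : {perm V}, is_aut adj s /\ s @: e1 = e2.

Definition degree (V : finType) (adj : rel V) (v : V) : nat := #|[set w | adj v w]|.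

Definition laplacian (R : realType) (V : finType) (adj : rel V) (u v : V) : Cplx R :=
  (if u == v then (degree adj u)%:R else 0) - (if adj u v then 1 else 0).

Definition lap_apply (R : realType) (V : finType) (adj : rel V)
    (x : V -> Cplx R) : V -> Cplx R :=
  fun u => \sum_(v : V) laplacian R adj u v * x v.

Definition lap_pow_apply (R : realType) (V : finType) (adj : rel V) (k : nat)
    (x : V -> Cplx R) : V -> Cplx R := iter k (@lap_apply R V adj) x.

Definition basis_vec (R : realType) (V : finType) (a : V) : V -> Cplx R :=
  fun v => (v == a)%:R.

(* U(t) x = exp(itL) x = sum_k (it)^k / k! L^k x; "U(t) x = y" means that
   the exponential series, applied to x, converges (entrywise) to y. *)
Definition U_maps_to (R : realType) (V : finType) (adj : rel V) (t : R)
    (x y : V -> Cplx R) : Prop :=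
  forall u : V,
    ((series (fun k : nat =>
       (('i * t%:C) ^+ k / (k`!)%:R) * lap_pow_apply adj k x u : Cplx R))
      @ \oo --> y u)%classic.

Definition pst (R : realType) (V : finType) (adj : rel V) (x y : V -> Cplx R) : Prop :=
  exists t : R, 0 <= t /\
    exists gamma : Cplx R, `|gamma| = 1 /\
      U_maps_to adj t x (fun v => gamma * y v).

(* Main.v *)
Require Import Defs.
From HB Require Import structures.
From mathcomp Require Import all_boot all_order all_algebra all_fingroup.
From mathcomp Require Import all_classical all_reals all_analysis.
From mathcomp Require Import complex.
Import numFieldTopology.Exports numFieldNormedType.Exports.
Import Order.TTheory GRing.Theory Num.Theory.
Local Open Scope ring_scope.

Section All.
Local Set Implicit Arguments.

Section B.
Variables (R : realType) (V : finType) (adj : rel V).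
Hypothesis Hsym : symmetric adj.
Local Open Scope complex_scope.
Local Open Scope classical_set_scope.

Definition ip (p q : V -> Cplx R) : Cplx R := \sum_u p u * q u.

Lemma lapC u v : laplacian R adj u v = laplacian R adj v u.
Proof.
rewrite /laplacian (eq_sym v u) Hsym.
by case: eqP => [->|].
Qed.

Lemma ip_lap q w : ip q (lap_apply adj w) = ip (lap_apply adj q) w.
Proof.
rewrite /ip /lap_apply.
under eq_bigr do rewrite big_distrr /=.
rewrite exchange_big /=; apply: eq_bigr => v _.
rewrite big_distrl /=; apply: eq_bigr => u _.
by rewrite lapC mulrCA mulrA.
Qed.

Lemma ip_pow k q p :
  ip q (lap_pow_apply adj k p) = ip (lap_pow_apply adj k q) p.
Proof.
elim: k q => [|k IH] q; first by [].
rewrite /lap_pow_apply iterS ip_lap -/(lap_pow_apply adj k p).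
by rewrite IH /lap_pow_apply iterSr.
Qed.

Lemma ipC p q : ip p q = ip q p.
Proof. by apply: eq_bigr => u _; rewrite mulrC. Qed.

Lemma lap_pow_scale k (c : Cplx R) x u :
  lap_pow_apply adj k (fun v => c * x v) u = c * lap_pow_apply adj k x u.
Proof.
elim: k u => [|k IH] u; first by [].
rewrite /lap_pow_apply !iterS /lap_apply big_distrr /=.
apply: eq_bigr => v _.
by rewrite -/(lap_pow_apply adj k _) IH -/(lap_pow_apply adj k _) mulrCA.
Qed.

Lemma lap_pow_perm (s : {perm V}) k (x : V -> Cplx R) u :
  is_aut adj s ->
  lap_pow_apply adj k (fun v => x (s v)) u = lap_pow_apply (R:=R) adj k x (s u).
Proof.
move=> hs.
have degs w : degree adj (s w) = degree adj w.
  rewrite /degree -(card_preimset _ (@perm_inj _ s)).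
  by apply: eq_card => z; rewrite !inE hs.
have Ls w z : laplacian R adj (s w) (s z) = laplacian R adj w z.
  by rewrite /laplacian hs degs (inj_eq (@perm_inj _ s)).
elim: k u => [|k IH] u; first by [].
rewrite /lap_pow_apply !iterS /lap_apply.
rewrite [RHS](reindex_inj (@perm_inj _ s)) /=.
apply: eq_bigr => v _.
by rewrite -/(lap_pow_apply adj k _) IH -/(lap_pow_apply adj k _) Ls.
Qed.


Lemma cvg_sumV (F : V -> nat -> Cplx R) (l : V -> Cplx R) :
  (forall u, F u @ \oo --> l u) ->
  (fun n => \sum_u F u n) @ \oo --> \sum_u l u.
Proof.
move=> h; apply: (@cvg_big (Cplx R) V +%R 0 predT _ _ \oo (index_enum V) (fun u n => F u n) l).
- exact: add_continuous.
- move=> u _; exact: h.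
Qed.

Lemma cvgMl_C (c : Cplx R) (f : nat -> Cplx R) (a : Cplx R) : f @ \oo --> a ->
  (fun n => (c * f n : Cplx R)) @ \oo --> (c * a : Cplx R).
Proof. move=> h. exact: (@cvgZl_tmp _ (Cplx R) _ \oo _ c f a h). Qed.

Lemma uniqC (f : nat -> Cplx R) (a b : Cplx R) : f @ \oo --> a -> f @ \oo --> b -> a = b.
Proof. move=> ha hb; exact: (cvg_unique _ ha hb). Qed.

Variable t : R.
Definition coef (k : nat) : Cplx R := ('i * t%:C) ^+ k / (k`!)%:R.

Lemma U_scale (c : Cplx R) x y : U_maps_to adj t x y ->
  U_maps_to adj t (fun v => c * x v) (fun v => c * y v).
Proof.
move=> h u; have := cvgMl_C c (h u).
suff -> : series (fun k : nat => ('i * t%:C) ^+ k / (k`!)%:R *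
           lap_pow_apply adj k (fun v => c * x v) u : Cplx R) =
  (fun n => c * series (fun k : nat => ('i * t%:C) ^+ k / (k`!)%:R *
           lap_pow_apply adj k x u : Cplx R) n) by [].
apply: funext => n; rewrite /series /= big_distrr /=.
by apply: eq_bigr => k _; rewrite lap_pow_scale mulrCA.
Qed.

Lemma U_perm (s : {perm V}) x y : is_aut adj s -> U_maps_to adj t x y ->
  U_maps_to adj t (fun v => x (s v)) (fun v => y (s v)).
Proof.
move=> hs h u; have := h (s u).
suff -> : series (fun k : nat => ('i * t%:C) ^+ k / (k`!)%:R *
           lap_pow_apply adj k (fun v => x (s v)) u : Cplx R) =
  series (fun k : nat => ('i * t%:C) ^+ k / (k`!)%:R *
           lap_pow_apply adj k x (s u) : Cplx R) by [].
apply: funext => n; rewrite /series /=.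
by apply: eq_bigr => k _; rewrite lap_pow_perm.
Qed.

Lemma U_sym p p' q q' : U_maps_to adj t p p' -> U_maps_to adj t q q' ->
  ip q p' = ip p q'.
Proof.
move=> hp hq.
have h1 := cvg_sumV (fun u n => q u * series (fun k : nat => ('i * t%:C) ^+ k / (k`!)%:R *
           lap_pow_apply adj k p u : Cplx R) n) (fun u => q u * p' u)
   (fun u => cvgMl_C (q u) (hp u)).
have h2 := cvg_sumV (fun u n => p u * series (fun k : nat => ('i * t%:C) ^+ k / (k`!)%:R *
           lap_pow_apply adj k q u : Cplx R) n) (fun u => p u * q' u)
   (fun u => cvgMl_C (p u) (hq u)).
rewrite /ip.
pose F1 := fun n => \sum_u q u * series (fun k => coef k * lap_pow_apply adj k p u) n.
pose F2 := fun n => \sum_u p u * series (fun k => coef k * lap_pow_apply adj k q u) n.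
apply: (uniqC (f:=F1) h1); rewrite (@eq_cvg _ _ \oo F1 F2); first exact: h2.
move=> n; rewrite /F1 /F2 /series /=.

under eq_bigr do rewrite big_distrr /=.
rewrite exchange_big /=.
under [RHS]eq_bigr do rewrite big_distrr /=.
rewrite [RHS]exchange_big /=.
apply: eq_bigr => k _.
transitivity (coef k * ip q (lap_pow_apply adj k p)).
  by rewrite /ip big_distrr; apply: eq_bigr => u _; rewrite mulrCA.
rewrite ip_pow ipC /ip big_distrr /=; apply: eq_bigr => u _; by rewrite mulrCA.
Qed.

End B.
Arguments ip {R V} p q.

Lemma even_inv (T : finType) (phi : T -> T) (n : nat) (A : {set T}) : (#|A| <= n)%N ->
  {in A, forall x, phi x \in A} -> {in A, forall x, phi x != x} ->
  {in A, forall x, phi (phi x) = x} -> ~~ odd #|A|.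
Proof.
elim: n A => [|n IH] A hn h1 h2 h3.
  by move: hn; rewrite leqn0 => /eqP ->.
case: (set_0Vmem A) => [-> | [x xA]]; first by rewrite cards0.
have pxA : phi x \in A :\ x by rewrite !inE h2 ?h1.
set B := A :\ x :\ phi x.
have cA : #|A| = (#|B|).+2.
  by rewrite (cardsD1 x A) xA (cardsD1 (phi x) (A :\ x)) pxA.
have hB y : y \in B -> [/\ y \in A, y != x & y != phi x].
  by rewrite !inE => /and3P[-> -> ->].
rewrite cA /= negbK.
apply: (IH B).
- by move: hn; rewrite cA ltnS => /ltnW.
- move=> y /hB [yA yx ypx]; rewrite !inE h1 // andbT.
  apply/andP; split; apply/eqP => E.
  + by move: yx; rewrite -(h3 y yA) E h3 ?eqxx.
  + by move: ypx; rewrite -(h3 y yA) E eqxx.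
- by move=> y /hB [yA _ _]; apply: h2.
- by move=> y /hB [yA _ _]; apply: h3.
Qed.

Section C.
Variables (R : realType) (V : finType) (adj : rel V).
Hypothesis Hsym : symmetric adj.
Hypothesis Hirr : irreflexive adj.
Variable t : R.

Definition xs (a b : V) : V -> Cplx R := fun v => basis_vec R a v - basis_vec R b v.

Lemma sum_delta a (f : V -> Cplx R) : \sum_u basis_vec R a u * f u = f a.
Proof.
rewrite (bigD1 a) //= /basis_vec eqxx mul1r big1 ?addr0 // => u /negPf ->.
by rewrite mul0r.
Qed.

Lemma ip_xs a b p q : ip (xs a b) (xs p q) =
  ((a == p)%:R - (a == q)%:R) - ((b == p)%:R - (b == q)%:R).
Proof.
rewrite /ip /xs.
under eq_bigr do rewrite mulrBl.
rewrite sumrB !sum_delta /basis_vec.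
by [].
Qed.

Lemma ip_scale (p q : V -> Cplx R) (g : Cplx R) : ip p (fun v => g * q v) = g * ip p q.
Proof. by rewrite /ip big_distrr; apply: eq_bigr => u _ /=; rewrite mulrCA. Qed.

Lemma key a b p q (d : Cplx R) : a != b -> p != q -> `|d| = 1 ->
  `|d * ip (xs a b) (xs p q)| = 2 -> [set a; b] = [set p; q].
Proof.
move=> nab npq hd; rewrite normrM hd mul1r ip_xs => H.
suff : ((a == p) && (b == q)) || ((a == q) && (b == p)).
  by case/orP => /andP[/eqP Ha /eqP Hb]; rewrite Ha Hb // finset.setUC.
have c1 : (a == p) -> (a == q) -> false.
  by move/eqP=> E1 /eqP E2; move: npq; rewrite -E1 -E2 eqxx.
have c2 : (b == p) -> (b == q) -> false.
  by move/eqP=> E1 /eqP E2; move: npq; rewrite -E1 -E2 eqxx.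
have c3 : (a == p) -> (b == p) -> false.
  by move/eqP=> E1 /eqP E2; move: nab; rewrite E1 E2 eqxx.
have c4 : (a == q) -> (b == q) -> false.
  by move/eqP=> E1 /eqP E2; move: nab; rewrite E1 E2 eqxx.
have h10 : (1 : Cplx R) != 2 by rewrite -[2]/(2%:R) -[1]/(1%:R) eqr_nat.
have h00 : (0 : Cplx R) != 2 by rewrite -[2]/(2%:R) -[0]/(0%:R) eqr_nat.
move: c1 c2 c3 c4 H; case: (a == p); case: (a == q); case: (b == p); case: (b == q) => //= c1 c2 c3 c4.
all: try (by have := c1 erefl erefl); try (by have := c2 erefl erefl);
  try (by have := c3 erefl erefl); try (by have := c4 erefl erefl).
all: rewrite ?subr0 ?sub0r ?opprK ?normrN ?normr1 ?normr0 => /eqP.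
all: by rewrite ?(negbTE h10) ?(negbTE h00).
Qed.

Definition Rel (e f : {set V}) : Prop := exists a b c d (g : Cplx R),
  [/\ e = [set a; b], f = [set c; d], adj a b, adj c d &
      `|g| = 1 /\ U_maps_to adj t (xs a b) (fun v => g * xs c d v)].

Lemma neq_adj (a b : V) : adj a b -> a != b.
Proof. by move=> h; apply/eqP => E; move: h; rewrite E Hirr. Qed.

Lemma orient (a b a' b' : V) : a != b -> [set a; b] = [set a'; b'] ->
  (a' = a /\ b' = b) \/ (a' = b /\ b' = a).
Proof.
move=> nab E.
have hb : b \in [set a'; b'] by rewrite -E set22.
have ha : a \in [set a'; b'] by rewrite -E set21.
have ha' : a' \in [set a; b] by rewrite E set21.
have hb' : b' \in [set a; b] by rewrite E set22.
move: ha' hb'; rewrite !inE => /orP[] /eqP ha' /orP[] /eqP hb'.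
- by move: hb nab; rewrite ha' hb' !inE orbb => /eqP ->; rewrite eqxx.
- by left.
- by right.
- by move: ha nab; rewrite ha' hb' !inE orbb => /eqP ->; rewrite eqxx.
Qed.

Lemma normalize (a b a' b' c d : V) (g : Cplx R) : a != b -> [set a; b] = [set a'; b'] ->
  `|g| = 1 -> U_maps_to adj t (xs a' b') (fun v => g * xs c d v) ->
  exists g', `|g'| = 1 /\ U_maps_to adj t (xs a b) (fun v => g' * xs c d v).
Proof.
move=> nab E hg hU.
case: (orient nab E) => [[Ea Eb]|[Ea Eb]]; move: hU; rewrite Ea Eb => hU.
  by exists g.
exists (- g); split; first by rewrite normrN.
have := U_scale (-1) hU.
have -> : (fun v => -1 * xs b a v) = xs a b.
  by apply: funext => v; rewrite /xs mulN1r opprB.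
have -> : (fun v => -1 * (g * xs c d v)) = (fun v => - g * xs c d v).
  by apply: funext => v; rewrite mulN1r mulNr.
by [].
Qed.

Lemma two_norm (c d : V) (g : Cplx R) : c != d -> `|g| = 1 ->
  `|g * ip (xs c d) (xs c d)| = 2.
Proof.
move=> ncd hg; rewrite ip_xs eqxx (negbTE ncd) eq_sym (negbTE ncd) /=.
rewrite subr0 sub0r opprK normrM hg mul1r.
rewrite eqxx; have -> : (1 + 1%:R : Cplx R) = 2%:R by [].
by rewrite normr_nat.
Qed.

Lemma Rel_fun e f1 f2 : Rel e f1 -> Rel e f2 -> f1 = f2.
Proof.
move=> [a [b [c [d [g [-> -> hab hcd [hg hU]]]]]]].
move=> [a' [b' [p [q [g' [E -> _ hpq [hg' hU']]]]]]].
have [g'' [hg'' hU'']] := normalize p q (neq_adj hab) E hg' hU'.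
have eqv v : g * xs c d v = g'' * xs p q v := uniqC (hU v) (hU'' v).
apply: (key c d p q (d:=g'')) (neq_adj hcd) (neq_adj hpq) hg'' _.
have : ip (xs c d) (fun v => g * xs c d v) = ip (xs c d) (fun v => g'' * xs p q v).
  by congr ip; apply: funext => v; exact: eqv.
rewrite !ip_scale => <-.
have H := two_norm c d (neq_adj hcd) hg. exact H.
Qed.

Lemma Rel_sym e f h : Rel e f -> Rel f h -> Rel f e.
Proof.
move=> [a [b [c [d [g [-> -> hab hcd [hg hU]]]]]]].
move=> [c' [d' [p [q [g' [E _ _ hpq [hg' hU']]]]]]].
have [g'' [hg'' hU'']] := normalize p q (neq_adj hcd) E hg' hU'.
have S := U_sym Hsym hU hU''.
rewrite !ip_scale in S.
have E2 : [set a; b] = [set p; q].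
  apply: (key a b p q (d:=g'')) (neq_adj hab) (neq_adj hpq) hg'' _.
  rewrite -S; have H := two_norm c d (neq_adj hcd) hg; exact H.
exists c, d, p, q, g''; split => //.
Qed.

Lemma permKV_eq (s : {perm V}) (v a : V) : (s^-1 v == a)%g = (v == s a).
Proof. by rewrite -(inj_eq (@perm_inj _ s)) permKV. Qed.

Lemma aut_inv (s : {perm V}) : is_aut adj s -> is_aut adj s^-1%g.
Proof. by move=> hs x y; rewrite -hs !permKV. Qed.

Lemma imset_pair (s : {perm V}) (a b : V) : s @: [set a; b] = [set s a; s b].
Proof. by rewrite imsetU1 imset_set1. Qed.

Lemma Rel_perm (s : {perm V}) e f : is_aut adj s -> Rel e f -> Rel (s @: e) (s @: f).
Proof.
move=> hs [a [b [c [d [g [-> -> hab hcd [hg hU]]]]]]].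
have := U_perm (aut_inv hs) hU.
have -> : (fun v => xs a b (s^-1%g v)) = xs (s a) (s b).
  by apply: funext => v; rewrite /xs /basis_vec !permKV_eq.
have -> : (fun v => g * xs c d (s^-1%g v)) = (fun v => g * xs (s c) (s d) v).
  by apply: funext => v; rewrite /xs /basis_vec !permKV_eq.
move=> hU2.
exists (s a), (s b), (s c), (s d), g; split => //; rewrite ?imset_pair ?hs //.
Qed.

Lemma in_edges e : e \in edges adj -> exists a b, adj a b /\ e = [set a; b].
Proof. by case/imset2P => a b _; rewrite /= inE => hb ->; exists a, b. Qed.

Lemma edges_in (a b : V) : adj a b -> [set a; b] \in edges adj.
Proof.
move=> h; apply/imset2P; apply: (Imset2spec (x1 := a) (x2 := b)) => //=.
by rewrite inE.
Qed.

Lemma Rel_edges e f : Rel e f -> e \in edges adj /\ f \in edges adj.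
Proof.
by move=> [a [b [c [d [g [-> -> hab hcd _]]]]]]; split; apply: edges_in.
Qed.

Lemma main_C e1 e2 : edge_transitive adj -> Rel e1 e2 -> e1 != e2 ->
  ~~ odd #|edges adj|.
Proof.
move=> HET R12 ne.
have tot e : e \in edges adj -> exists f, Rel e f.
  move=> he; have [he1 _] := Rel_edges R12.
  have [s [hs <-]] := HET e1 e he1 he.
  by exists (s @: e2); apply: Rel_perm.
have irr e : Rel e e -> False.
  move=> Hee; have [he _] := Rel_edges Hee; have [he1 _] := Rel_edges R12.
  have [s [hs Es]] := HET e e1 he he1.
  have := Rel_perm hs Hee; rewrite Es => H11.
  by move: ne; rewrite (Rel_fun H11 R12) eqxx.
pose phi e := if [pick f | `[< Rel e f >]] is Some f then f else e.
have phiP e : e \in edges adj -> Rel e (phi e).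
  move=> he; rewrite /phi; case: pickP => [f /asboolP //|H].
  have [f Hf] := tot e he.
  by move: (H f); rewrite asboolT.
apply: (@even_inv _ phi _ _ (leqnn _)) => e he.
- by have [] := Rel_edges (phiP e he).
- apply/eqP => E; apply: (irr e); have := phiP e he; rewrite E; exact.
- have he' : phi e \in edges adj by have [] := Rel_edges (phiP e he).
  have [f Hf] := tot _ he'.
  have S := Rel_sym (phiP e he) Hf.
  exact: (Rel_fun (phiP _ he') S).
Qed.

End C.
End All.

Theorem mainTheorem15 (R : realType) (V : finType) (adj : rel V) :
  simple_graph adj ->
  edge_transitive adj ->
  odd #|edges adj| ->
  forall a b c d : V,
    adj a b -> adj c d -> [set a; b] != [set c; d] ->
    ~ pst adj (fun v => basis_vec R a v - basis_vec R b v)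
              (fun v => basis_vec R c v - basis_vec R d v).
Proof.
move=> [Hsym Hirr] HET Hodd a b c d hab hcd hne [t [_ [g [hg hU]]]].
have R0 : @Rel R V adj t [set a; b] [set c; d].
  by exists a, b, c, d, g; split => //; split => //; exact hU.
by move: Hodd; apply/negP; apply: (main_C Hsym Hirr HET R0 hne).
Qed.
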